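(* Let $K_1,\dots,K_n\colon\mathbb{E}(D)\to\mathbb{E}(D)$ be affine functions. Then $$\mu X.\,\min\{K_1(X),\dots,K_n(X)\}\;=\;\inf_{\substack{t_1,\dots,t_n\colon D\to[0,1]\\ t_1+\dots+t_n=\mathbb{1}}}\ \mu X.\,\sum_{i=1}^n t_i\cdot K_i(X).$$
   Context: $\mathbb{E}(D)$ is the set of functions $D\to[0,\infty]$ with pointwise order and operations ($\infty+x=\infty$, $0\cdot\infty=0$, $r\cdot\infty=\infty$ for $r>0$); $\min$ and the products $t_i\cdot K_i(X)$ are taken pointwise; $\mathbb{1}$ is the constant function $1$. $K$ is affine if $K(\alpha\eta_1+(1-\alpha)\eta_2)=\alpha K(\eta_1)+(1-\alpha)K(\eta_2)$ for all $\eta_1,\eta_2$ and $\alpha\in[0,1]$. $\mu X.\,G(X)$ denotes the least fixed point of a monotone $G$ on the complete lattice $\mathbb{E}(D)$. *)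

(* Defs.v *)
(* E(D) = functions D -> [0,+oo], modelled as
   functions D -> \bar R that are pointwise nonnegative. *)
From HB Require Import structures.
From mathcomp Require Import all_boot all_order all_algebra.
From mathcomp Require Import all_classical all_reals ereal.
Set Implicit Arguments. Unset Strict Implicit. Unset Printing Implicit Defensive.
Import Order.TTheory GRing.Theory Num.Theory.
Local Open Scope classical_set_scope.
Local Open Scope ring_scope.
Local Open Scope ereal_scope.

Definition nonnegf (R : realType) (D : Type) (f : D -> \bar R) : Prop :=
  forall d, 0 <= f d.

Definition maps_E (R : realType) (D : Type) (K : (D -> \bar R) -> (D -> \bar R)) : Prop :=
  forall eta, nonnegf eta -> nonnegf (K eta).

(* K is affine on E(D) (pointwise operations, 0 * +oo = 0) *)
Definition affineE (R : realType) (D : Type) (K : (D -> \bar R) -> (D -> \bar R)) : Prop :=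
  forall (eta1 eta2 : D -> \bar R) (a : R), nonnegf eta1 -> nonnegf eta2 ->
    (0 <= a <= 1)%R ->
    K (fun d => a%:E * eta1 d + (1 - a)%:E * eta2 d)
    = (fun d => a%:E * K eta1 d + (1 - a)%:E * K eta2 d).

(* Pointwise infimum of a set of elements of E(D) (the meet in the complete
   lattice E(D); the infimum of the empty set is the constant +oo). *)
Definition infE (R : realType) (D : Type) (S : set (D -> \bar R)) : D -> \bar R :=
  fun d => ereal_inf [set X d | X in S].

(* Least fixed point mu X. G(X) on E(D), via Knaster--Tarski: the meet of all
   prefixed points of G in E(D).  For monotone G this is the least fixed point. *)
Definition lfpE (R : realType) (D : Type) (G : (D -> \bar R) -> (D -> \bar R)) : D -> \bar R :=
  infE [set X | nonnegf X /\ (forall d, G X d <= X d)].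

(* Main.v *)
Require Import Defs.
From HB Require Import structures.
From mathcomp Require Import all_boot all_order all_algebra.
From mathcomp Require Import all_classical all_reals ereal.
Import Order.TTheory GRing.Theory Num.Theory.
Local Open Scope classical_set_scope.
Local Open Scope ring_scope.
Local Open Scope ereal_scope.

Lemma min_le_conv (R : realType) (n : nat) (t : 'I_n -> R) (a : 'I_n -> \bar R) :
  (forall i, 0 <= a i) -> (forall i, (0 <= t i)%R) -> (\sum_(i < n) t i)%R = 1%R ->
  \big[mine/+oo]_(i < n) a i <= \sum_(i < n) (t i)%:E * a i.
Proof.
move=> a0 t0 t1.
set m := \big[mine/+oo]_(i < n) a i.
have -> : m = (\sum_(i < n) t i)%:E * m by rewrite t1 mul1e.
rewrite -sumEFin ge0_sume_distrl; last by move=> i _; rewrite lee_fin.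
apply: lee_sum => i _; apply: lee_wpmul2l; first by rewrite lee_fin.
exact: bigmin_le.
Qed.

Theorem propositionE3 (R : realType) (D : Type) (n : nat)
  (K : 'I_n -> (D -> \bar R) -> (D -> \bar R))
  (HKE : forall i, maps_E (K i))
  (HKaff : forall i, affineE (K i)) :
  lfpE (fun X d => \big[mine/+oo]_(i < n) K i X d)
  = infE [set lfpE (fun X d => \sum_(i < n) (t i d)%:E * K i X d)
         | t in [set t : 'I_n -> D -> R |
                  (forall i d, (0 <= t i d <= 1)%R) /\
                  (forall d, (\sum_(i < n) t i d)%R = 1%R)]].
Proof.
apply/funext => d; apply/eqP; rewrite eq_le; apply/andP; split.
- apply: le_ereal_inf_tmp => _ [_ [t [t01 t1] <-] <-].
  apply: le_ereal_inf_tmp => _ [Z [Z0 HZ] <-].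
  apply: ereal_inf_lbound; exists Z => //; split => // d'.
  apply: le_trans (HZ d').
  apply: min_le_conv => [i|i|]; last exact: t1.
  + exact: HKE.
  + by case/andP: (t01 i d').
- apply: le_ereal_inf_tmp => _ [Y [Y0 HY] <-].
  case: n K HKE HKaff HY => [|m] K HKE HKaff HY.
  + have := HY d; rewrite big_ord0 leye_eq => /eqP ->; exact: leey.
  pose j d' := s2val (@eq_bigmin _ _ _ +oo%E (@ord0 m) xpredT
                    (fun i => K i Y d') isT (fun i _ => leey _)).
  have hj d' : \big[mine/+oo]_(i < m.+1) K i Y d' = K (j d') Y d'.
    rewrite /j; by case: (eq_bigmin _ _ _).
  pose t (i : 'I_m.+1) d' : R := if i == j d' then 1%R else 0%R.
  have tsum d' : (\sum_(i < m.+1) t i d')%R = 1%R.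
    rewrite (bigD1 (j d')) //= /t eqxx big1 ?addr0 // => i /negbTE ->; done.
  apply: le_trans (ereal_inf_lbound _) _.
    exists (lfpE (fun X d => \sum_(i < m.+1) (t i d)%:E * K i X d)) => //.
    exists t => //; split => // i d'; rewrite /t; case: ifP => _.
      by rewrite ler01 lexx.
    by rewrite lexx ler01.
  apply: ereal_inf_lbound; exists Y => //; split => // d'.
  apply: le_trans (HY d').
  rewrite hj (bigD1 (j d')) //= /t eqxx mul1e big1 ?adde0 //.
  by move=> i /negbTE ->; rewrite mul0e.
Qed.
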